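(* Consider binary data $(x,y^* )$ with real covariate $x$ and true label $y^*\in\{0,1\}$, $p_k^*=\mathbb{P}(y^*=k)>0$, where covariates with true label $k$ have density $f_k^*$; let $X_k^*\sim f_k^*$ and assume $\mathbb{E}|X_k^*|<\infty$, $\mathbb{E}[X_1^*]>0$, $\mathbb{E}[X_0^*]<0$, $\mathbb{P}(X_1^*<0)>0$, $\mathbb{P}(X_0^*>0)>0$. Suppose observed labels $y$ arise by flipping each true label to the other class, independently across observations, with a probability that may depend on the true label and on $x$. Let $p_k=\mathbb{P}(y=k)$, let $X_k$ have the law of $x$ given $y=k$, and let $X$ have the (unconditional) law of $x$. Assume (iii) $\mathbb{E}[X_1^*]\ge\mathbb{E}[X_1]$ and $\mathbb{E}[X_0^*]\le\mathbb{E}[X_0]$; (iv) $p_1^*\mathbb{E}[X_1^*]-p_0^*\mathbb{E}[X_0^*]>p_1\mathbb{E}[X_1]-p_0\mathbb{E}[X_0]$. Define \[ \mathcal{L}^*(s)=s\big(p_1^*\mathbb{E}[X_1^*]-p_0^*\mathbb{E}[X_0^*]\big)-\mathbb{E}\big[\log(e^{sX}+e^{-sX})\big],\quad \mathcal{L}(s)=s\big(p_1\mathbb{E}[X_1]-p_0\mathbb{E}[X_0]\big)-\mathbb{E}\big[\log(e^{sX}+e^{-sX})\big], \] and suppose $\mathcal{L}^*$ and $\mathcal{L}$ attain their maxima over $s\in\mathbb{R}$ at $\hat s^*$ and $\hat s$ respectively. Then $\hat s<\hat s^*$.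
   Context: The model is one-dimensional logistic regression without intercept, $\mathbb{P}(y^*=1\mid x)=e^{sx}/(e^{sx}+e^{-sx})$; $\mathcal{L}^*$ and $\mathcal{L}$ are the large-sample limits of the normalised log-likelihoods on clean and on mislabelled data, so $\hat s^*$ and $\hat s$ are the limiting standard logistic regression estimates of $s$ from clean and noisy data. *)

(* Defs.v *)
From HB Require Import structures.
From mathcomp Require Import all_boot all_order all_algebra.
From mathcomp Require Import all_classical all_reals all_analysis.
Set Implicit Arguments. Unset Strict Implicit. Unset Printing Implicit Defensive.
Import Order.TTheory GRing.Theory Num.Theory.
Import numFieldNormedType.Exports.
Local Open Scope classical_set_scope.
Local Open Scope ring_scope.

Section Defs.
Context {d : measure_display} {T : measurableType d} {R : realType}
  (P : probability T R).

(* the event {lab = k} for a label map lab : T -> bool (true = class 1) *)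
Definition lab_event (lab : T -> bool) (k : bool) : set T :=
  [set t | lab t = k].

Definition lab_prob (lab : T -> bool) (k : bool) : R :=
  fine (P (lab_event lab k)).

Definition Eon (g : T -> R) (A : set T) : R :=
  fine (\int[P]_(t in A) (g t)%:E).

Definition cond_mean (x : T -> R) (lab : T -> bool) (k : bool) : R :=
  Eon x (lab_event lab k) / lab_prob lab k.

Definition loglik (x : T -> R) (lab : T -> bool) (s : R) : R :=
  s * (lab_prob lab true * cond_mean x lab true
       - lab_prob lab false * cond_mean x lab false)
  - Eon (fun t => ln (expR (s * x t) + expR (- (s * x t)))) setT.

End Defs.

(* Main.v *)
Require Import Defs.
From HB Require Import structures.
From mathcomp Require Import all_boot all_order all_algebra.
From mathcomp Require Import all_classical all_reals all_analysis.
From mathcomp Require Import measurable_realfun.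
From mathcomp Require Import ring lra.
Import Order.TTheory GRing.Theory Num.Theory.
Import numFieldNormedType.Exports.
Local Open Scope classical_set_scope.
Local Open Scope ring_scope.
Section K.
Context {R : realType}.
Definition hf (w : R) := ln (expR w + expR (- w)).

Lemma ln_le_sub1 (y : R) : 0 < y -> ln y <= y - 1.
Proof. move=> y0; have := @le_ln1Dx R (y - 1); rewrite addrCA subrr addr0; apply; lra. Qed.

Lemma key_ratio (u v : R) :
  hf (u + v) + hf (u - v) - 2 * hf u =
  ln (1 + (expR v - (expR v)^-1) ^+ 2 / (expR u + (expR u)^-1) ^+ 2).
Proof.
rewrite /hf !opprD !expRD !expRN ?opprK ?invrK.
set a := expR u; set b := expR v.
have a0 : 0 < a by apply: expR_gt0.
have b0 : 0 < b by apply: expR_gt0.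
have ai0 : 0 < a^-1 by rewrite invr_gt0.
have bi0 : 0 < b^-1 by rewrite invr_gt0.
rewrite -lnM ?posrE; [|by rewrite ?(mulr_gt0, addr_gt0)|by rewrite ?(mulr_gt0, addr_gt0)].
have D0 : 0 < (a + a^-1) ^+ 2 by rewrite exprn_gt0 //; lra.
rewrite (_ : 2 * ln (a + a^-1) = ln (a + a^-1) + ln (a + a^-1)); last by ring.
rewrite -lnM ?posrE; [|lra|lra].
rewrite -expr2 -ln_div ?posrE; [|by rewrite ?(mulr_gt0, addr_gt0)|done].
congr ln.
have an : a != 0 by rewrite gt_eqF.
have bn : b != 0 by rewrite gt_eqF.
field; rewrite an bn andbT /= gt_eqF //; nra.
Qed.

Lemma ratio_le (a b : R) : 0 < a -> 0 < b ->
  1 + (b - b^-1) ^+ 2 / (a + a^-1) ^+ 2 <= 1 + (b - b^-1) ^+ 2 / 4.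
Proof.
move=> a0 b0.
have ha : a * a^-1 = 1 by rewrite mulfV // gt_eqF.
have D4 : 4 <= (a + a^-1) ^+ 2.
  have -> : (a + a^-1) ^+ 2 = (a - a^-1) ^+ 2 + 4 by rewrite !expr2; nra.
  rewrite lerDr; exact: sqr_ge0.
rewrite lerD2l ler_pdivrMr; last lra.
have q0 := sqr_ge0 (b - b^-1).
rewrite mulrAC; apply: (@le_trans _ _ ((b - b^-1) ^+ 2 * 1)); first by rewrite mulr1.
rewrite -mulrA ler_wpM2l // ler_pdivlMr; lra.
Qed.

Lemma key_q (u v : R) :
  hf (u + v) + hf (u - v) - 2 * hf u <= (expR v - (expR v)^-1) ^+ 2 / 4.
Proof.
rewrite key_ratio.
have a0 := expR_gt0 u; have b0 := expR_gt0 v.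
have D0 : 0 < (expR u + (expR u)^-1) ^+ 2.
  by rewrite exprn_gt0 // addr_gt0 // invr_gt0.
have q0 := sqr_ge0 (expR v - (expR v)^-1).
have P0 : 0 < 1 + (expR v - (expR v)^-1) ^+ 2 / (expR u + (expR u)^-1) ^+ 2.
  by apply: (lt_le_trans ltr01); rewrite lerDl divr_ge0 // ltW.
apply: (le_trans (ln_le_sub1 _ P0)).
have := ratio_le _ _ a0 b0; lra.
Qed.

Lemma key_abs (u v : R) :
  hf (u + v) + hf (u - v) - 2 * hf u <= 2 * `|v|.
Proof.
rewrite key_ratio.
have a0 := expR_gt0 u; have b0 := expR_gt0 v.
have bi0 : 0 < (expR v)^-1 by rewrite invr_gt0.
have D0 : 0 < (expR u + (expR u)^-1) ^+ 2.
  by rewrite exprn_gt0 // addr_gt0 // invr_gt0.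
have q0 := sqr_ge0 (expR v - (expR v)^-1).
have P0 : 0 < 1 + (expR v - (expR v)^-1) ^+ 2 / (expR u + (expR u)^-1) ^+ 2.
  by apply: (lt_le_trans ltr01); rewrite lerDl divr_ge0 // ltW.
rewrite -[X in _ <= X]expRK ler_ln ?posrE ?expR_gt0 //.
apply: (le_trans (ratio_le _ _ a0 b0)).
have c1 : expR v <= expR `|v| by rewrite ler_expR ler_norm.
have c2 : (expR v)^-1 <= expR `|v| by rewrite -expRN ler_expR -normrN ler_norm.
have hb : expR v * (expR v)^-1 = 1 by rewrite mulfV // gt_eqF.
move: (expR v) b0 bi0 c1 c2 hb => b b0 bi0 c1 c2 hb.
have -> : 2 * `|v| = `|v| + `|v| by ring.
rewrite expRD.
have -> : 1 + (b - b^-1) ^+ 2 / 4 = ((b + b^-1) / 2) ^+ 2 + (1 - b * b^-1).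
  by move: (b^-1) => bi; field.
rewrite hb subrr addr0 expr2.
have h1 : 0 <= (b + b^-1) / 2 by lra.
have h2 : (b + b^-1) / 2 <= expR `|v| by lra.
apply: ler_pM => //.
Qed.

Lemma key_sq (u v : R) : `|v| <= 1/2 ->
  hf (u + v) + hf (u - v) - 2 * hf u <= 3 * v ^+ 2.
Proof.
move=> hv; apply: (le_trans (key_q u v)).
suff : `|expR v - (expR v)^-1| <= 3 * `|v|.
  move=> H; have := sqr_ge0 (expR v - (expR v)^-1).
  rewrite -(real_normK (num_real (expR v - _))) -(real_normK (num_real v)).
  have := normr_ge0 (expR v - (expR v)^-1); have := normr_ge0 v.
  nra.
have gen w : 0 <= w -> w <= 1/2 -> `|expR w - (expR w)^-1| <= 3 * w.
  move=> w0 w1.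
  have e1 := expR_ge1Dx (- w).
  have e0 := expR_gt0 w.
  have hw : expR w * expR (- w) = 1 by rewrite expRxMexpNx_1.
  have ew : expR w <= 1 + 2 * w by nra.
  have ge : (expR w)^-1 <= expR w.
    rewrite -expRN ler_expR; lra.
  rewrite -expRN ger0_norm; [lra|].
  by rewrite expRN subr_ge0.
case: (lerP 0 v) => v0.
  by rewrite [`|v|](ger0_norm v0) in hv *; apply: gen.
rewrite [`|v|](ltr0_norm v0) in hv *.
have H := gen R (- v) ltac:(lra) hv.
by rewrite expRN invrK distrC in H.
Qed.

Lemma hf_bound (w : R) : `|hf w| <= 1 + `|w|.
Proof.
rewrite /hf.
have e0 := expR_gt0 w; have e1 := expR_gt0 (- w).
have c1 : expR w <= expR `|w| by rewrite ler_expR ler_norm.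
have c2 : expR (- w) <= expR `|w| by rewrite ler_expR -normrN ler_norm.
have ge1 : 1 <= expR w + expR (- w).
  case: (lerP 0 w) => w0.
    have : 1 <= expR w by rewrite -expR0 ler_expR.
    lra.
  have : 1 <= expR (- w) by rewrite -expR0 ler_expR; lra.
  lra.
rewrite ger0_norm; last exact: ln_ge0.
have l2 : ln 2 <= 1 :> R.
  have := ln_le_sub1 (2:R) ltac:(lra); lra.
apply: (@le_trans _ _ (ln (2 * expR `|w|))).
  rewrite ler_ln ?posrE; [lra|lra|].
  by rewrite mulr_gt0 // expR_gt0.
rewrite lnM ?posrE ?expR_gt0 // expRK; lra.
Qed.
End K.
Section M.
Context (d : measure_display) (T : measurableType d) (R : realType)
  (P : probability T R) (x : T -> R).
Hypothesis mx : measurable_fun setT x.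
Hypothesis ix : P.-integrable setT (EFin \o x).

Lemma mhf (s : R) : measurable_fun setT (fun t => hf (s * x t)).
Proof.
rewrite /hf.
apply: measurableT_comp; first exact: measurable_ln.
apply: measurable_funD.
  apply: measurableT_comp; first exact: measurable_expR.
  by apply: measurable_funM.
apply: measurableT_comp; first exact: measurable_expR.
apply: measurableT_comp => //.
by apply: measurable_funM.
Qed.

Lemma iabsx : P.-integrable setT (EFin \o (fun t => `|x t|)).
Proof. exact: integrable_norm. Qed.

Lemma ihf (s : R) : P.-integrable setT (EFin \o (fun t => hf (s * x t))).
Proof.
apply: (@le_integrable _ _ _ _ _ _ _ (EFin \o (fun t => 1 + `|s| * `|x t|))) => //.
- by apply: measurableT_comp => //; exact: mhf.
- move=> t _ /=; rewrite lee_fin.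
  rewrite (ger0_norm (_ : 0 <= 1 + `|s| * `|x t|)); last first.
    by rewrite addr_ge0 // mulr_ge0.
  by rewrite (le_trans (hf_bound _)) // normrM.
- have -> : EFin \o (fun t => 1 + `|s| * `|x t|) =
     (EFin \o cst 1) \+ (fun t : T => ((`|s|)%:E * (`|x t|)%:E)%E).
    by apply/funext => t /=; rewrite EFinD EFinM.
  apply: integrableD => //.
    exact: finite_measure_integrable_cst.
  apply: integrableZl => //; exact: iabsx.
Qed.

Definition FF (s : R) := Rintegral P setT (fun t => hf (s * x t)).
Definition tt (n : nat) : R := (n.+1%:R)^-1.
Definition psi (n : nat) : T -> R :=
  (fun w => 2 * `|x w|) \min (fun w => 4 * tt n * x w ^+ 2).

Lemma tt_gt0 n : 0 < tt n.
Proof. by rewrite /tt invr_gt0. Qed.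

Lemma mpsi n : measurable_fun setT (psi n).
Proof.
apply: measurable_minr.
  apply: measurable_funM => //; apply: measurableT_comp => //.
apply: measurable_funM => //; apply: measurable_funX => //.
Qed.

Lemma psi_ge0 n w : 0 <= psi n w.
Proof.
rewrite /psi /= le_min; apply/andP; split.
  by rewrite mulr_ge0.
by rewrite mulr_ge0 // ?sqr_ge0 // mulr_ge0 // ltW // tt_gt0.
Qed.

Lemma psi_le n w : psi n w <= 2 * `|x w|.
Proof. by rewrite /psi /= ge_min lexx. Qed.

Lemma ipsi n : P.-integrable setT (EFin \o psi n).
Proof.
apply: (@le_integrable _ _ _ _ _ _ _ (EFin \o (fun t => 2 * `|x t|))) => //.
- by apply: measurableT_comp => //; exact: mpsi.
- move=> t _ /=; rewrite lee_fin (ger0_norm (psi_ge0 _ _)).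
  by rewrite (le_trans (psi_le _ _)) // ler_norm.
- have -> : EFin \o (fun t => 2 * `|x t|) = (fun t : T => (2%:E * (`|x t|)%:E)%E).
    by apply/funext => t /=; rewrite EFinM.
  by apply: integrableZl => //; exact: iabsx.
Qed.

Lemma pt_bound n (s0 : R) w :
  hf (s0 * x w + tt n * x w) + hf (s0 * x w - tt n * x w) - 2 * hf (s0 * x w)
  <= tt n * psi n w.
Proof.
have t0 := tt_gt0 n.
set v := tt n * x w.
have nv : `|v| = tt n * `|x w| by rewrite /v normrM gtr0_norm.
have x2 : x w ^+ 2 = `|x w| ^+ 2 by rewrite real_normK // num_real.
have xa := normr_ge0 (x w).
rewrite /psi /=.
have [hAB|hAB] := leP (2 * `|x w|) (4 * tt n * x w ^+ 2).

  apply: (le_trans (key_abs _ _)); rewrite nv; lra.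

case: (lerP `|v| (1/2)) => hv.
  apply: (le_trans (key_sq _ _ hv)).
  rewrite -(real_normK (num_real v)) nv x2.
  have : 0 <= tt n * tt n * `|x w| ^+ 2 by rewrite !mulr_ge0 // ?sqr_ge0 // ltW.
  rewrite !expr2 => h. nra.
exfalso; move: hAB hv; rewrite nv x2 expr2; nra.
Qed.

Lemma ihf2 (s1 s2 : R) :
  P.-integrable setT (EFin \o (fun w => hf (s1 * x w) + hf (s2 * x w))).
Proof.
have -> : EFin \o (fun w => hf (s1 * x w) + hf (s2 * x w)) =
   (EFin \o (fun w => hf (s1 * x w))) \+ (EFin \o (fun w => hf (s2 * x w))).
  by apply/funext => w /=; rewrite EFinD.
by apply: integrableD => //; exact: ihf.
Qed.

Lemma ihf1 (s1 : R) :
  P.-integrable setT (EFin \o (fun w => 2 * hf (s1 * x w))).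
Proof.
have -> : EFin \o (fun w => 2 * hf (s1 * x w)) =
   (fun w => (2%:E * (EFin \o (fun w => hf (s1 * x w))) w)%E).
  by apply/funext => w /=; rewrite EFinM.
by apply: integrableZl => //; exact: ihf.
Qed.

Lemma step (bs a s0 : R) (n : nat) :
  (forall s, s * bs - FF s <= s0 * bs - FF s0) ->
  (forall s, s * a - FF s <= s0 * a - FF s0) ->
  bs - a <= Rintegral P setT (psi n).
Proof.
move=> H1 H2.
have t0 := tt_gt0 n.
have h1 := H1 (s0 + tt n); have h2 := H2 (s0 - tt n).
have E : Rintegral P setT (fun w => hf ((s0 + tt n) * x w) + hf ((s0 - tt n) * x w)
            - 2 * hf (s0 * x w)) = FF (s0 + tt n) + FF (s0 - tt n) - 2 * FF s0.
  rewrite RintegralB //; [|exact: ihf2|exact: ihf1].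
  rewrite RintegralD //; [|exact: ihf|exact: ihf].
  rewrite RintegralZl //; exact: ihf.
have L : Rintegral P setT (fun w => hf ((s0 + tt n) * x w) + hf ((s0 - tt n) * x w)
            - 2 * hf (s0 * x w)) <= Rintegral P setT (fun w => tt n * psi n w).
  apply: le_Rintegral => //.
  - pose A := (fun w => hf ((s0 + tt n) * x w) + hf ((s0 - tt n) * x w)).
    pose B := (fun w => 2 * hf (s0 * x w)).
    have -> : EFin \o (fun w => A w - B w) = (fun w => (EFin (A w) - EFin (B w))%E).
      by apply/funext => w /=; rewrite EFinB.
    exact: (integrableB measurableT (ihf2 (s0 + tt n) (s0 - tt n)) (ihf1 s0)).
  - have -> : EFin \o (fun w => tt n * psi n w) =
       (fun w => ((tt n)%:E * (EFin \o psi n) w)%E).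
      by apply/funext => w /=; rewrite EFinM.
    exact: (integrableZl measurableT (tt n) (ipsi n)).
  - move=> w _; rewrite mulrDl mulrBl; exact: pt_bound.
rewrite E (RintegralZl _ measurableT (ipsi n)) in L.
clear E H1 H2.
move: (FF (s0 + tt n)) (FF (s0 - tt n)) (FF s0) (Rintegral P setT (psi n)) h1 h2 L => F1 F2 F0 I h1 h2 L.
rewrite -(ler_pM2l t0) mulrBr.
rewrite mulrDl in h1; rewrite mulrBl in h2.
rewrite [tt n * bs]mulrC [tt n * a]mulrC; lra.
Qed.

Lemma core (bs a s0 : R) : a < bs ->
  (forall s, s * bs - FF s <= s0 * bs - FF s0) ->
  (forall s, s * a - FF s <= s0 * a - FF s0) -> False.
Proof.
move=> hab H1 H2.
have mf_ : forall n, measurable_fun setT (fun w => (psi n w)%:E).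
  by move=> n; apply: measurableT_comp => //; exact: mpsi.
have ig : P.-integrable setT (fun w => (2 * `|x w|)%:E).
  have -> : (fun w => (2 * `|x w|)%:E) = (fun t : T => (2%:E * (`|x t|)%:E)%E).
    by apply/funext => t /=; rewrite EFinM.
  exact: (integrableZl measurableT 2 iabsx).
have ff : {ae P, forall w, setT w ->
    (fun n => (psi n w)%:E) @ \oo --> (cst 0%E : T -> \bar R) w}.
  apply: aeW => w _ /=.
  apply: cvg_EFin; first by apply: nearW.
  apply: (squeeze_cvgr (f := fun _ => 0) (h := fun n => 4 * x w ^+ 2 * harmonic n)).
  - apply: nearW => n /=; rewrite psi_ge0 /= /psi /= ge_min; apply/orP; right.
    by rewrite /tt mulrAC.
  - exact: cvg_cst.
  - rewrite -(mulr0 (4 * x w ^+ 2)); apply: cvgM; [exact: cvg_cst|exact: cvg_harmonic].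
have fg : {ae P, forall w n, setT w -> (`|(psi n w)%:E| <= (2 * `|x w|)%:E)%E}.
  apply: aeW => w n _ /=; rewrite lee_fin ger0_norm ?psi_ge0 //; exact: psi_le.
have [_ _ cv] := @dominated_convergence _ T R P setT measurableT
  (fun n w => (psi n w)%:E) (cst 0%E) (fun w => (2 * `|x w|)%:E) mf_
  (measurable_cst _) ff ig fg.
rewrite integral0 in cv.
have : ((bs - a)%:E <= 0)%E.
  apply: (cvge_ge _ cv); apply: nearW => n /=.
  rewrite -[X in (_ <= X)%E]fineK; last exact: (integrable_fin_num measurableT (ipsi n)).
  rewrite lee_fin; exact: (step _ _ _ n H1 H2).
rewrite lee_fin; lra.
Qed.
End M.
Theorem proposition2 (d : measure_display) (T : measurableType d)
  (R : realType) (P : probability T R)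
  (x : T -> R) (ystar y : T -> bool) (fstar : bool -> R -> R)
  (shatstar shat : R) :
  measurable_fun setT x ->
  (forall k, measurable (lab_event ystar k)) ->
  (forall k, measurable (lab_event y k)) ->
  (* p_k^* > 0 *)
  (forall k, 0 < lab_prob P ystar k) ->
  (* the law of x given y^* = k has density f_k^* (w.r.t. Lebesgue measure) *)
  (forall k u, 0 <= fstar k u) ->
  (forall k, measurable_fun setT (fstar k)) ->
  (forall k (A : set R), measurable A ->
     P (lab_event ystar k `&` x @^-1` A)
     = ((lab_prob P ystar k)%:E
       * \int[@lebesgue_measure R]_(u in A) (fstar k u)%:E)%E) ->
  (* E|X_k^*| < oo *)
  (forall k, P.-integrable (lab_event ystar k) (fun t => (x t)%:E)) ->
  0 < cond_mean P x ystar true ->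
  cond_mean P x ystar false < 0 ->
  (* P(X_1^* < 0) > 0 and P(X_0^* > 0) > 0 *)
  (0 < P (lab_event ystar true `&` [set t | (x t < 0)%R]))%E ->
  (0 < P (lab_event ystar false `&` [set t | (0 < x t)%R]))%E ->
  (* observed labels: X_k (law of x given y = k) is defined *)
  (forall k, 0 < lab_prob P y k) ->
  (* (iii) *)
  cond_mean P x y true <= cond_mean P x ystar true ->
  cond_mean P x ystar false <= cond_mean P x y false ->
  (* (iv) *)
  lab_prob P y true * cond_mean P x y true
    - lab_prob P y false * cond_mean P x y false
  < lab_prob P ystar true * cond_mean P x ystar true
    - lab_prob P ystar false * cond_mean P x ystar false ->
  (* shat^* maximises L^*, shat maximises L *)
  (forall s, loglik P x ystar s <= loglik P x ystar shatstar) ->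
  (forall s, loglik P x y s <= loglik P x y shat) ->
  shat < shatstar.
Proof.
move=> mx Hm _ _ _ _ _ Hi _ _ _ _ _ _ _ Hiv Hmax1 Hmax2.
have ix : P.-integrable setT (EFin \o x).
  have i1 := (integrable_mkcond _ (Hm true)).1 (Hi true).
  have i0 := (integrable_mkcond _ (Hm false)).1 (Hi false).
  have -> : EFin \o x = ((fun t => (x t)%:E) \_ (lab_event ystar true)) \+
                        ((fun t => (x t)%:E) \_ (lab_event ystar false)).
    apply/funext => t /=; rewrite /restrict.
    case E: (ystar t).
      rewrite mem_set; last by rewrite /lab_event /= E.
      rewrite memNset ?adde0 //; by rewrite /lab_event /= E.
    rewrite memNset; last by rewrite /lab_event /= E.
    rewrite mem_set ?add0e //; by rewrite /lab_event /= E.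
  exact: (integrableD measurableT i1 i0).
set bs := lab_prob P ystar true * cond_mean P x ystar true
    - lab_prob P ystar false * cond_mean P x ystar false in Hiv Hmax1.
set a := lab_prob P y true * cond_mean P x y true
    - lab_prob P y false * cond_mean P x y false in Hiv Hmax2.
have K1 s : loglik P x ystar s = s * bs - FF _ _ _ P x s by [].
have K2 s : loglik P x y s = s * a - FF _ _ _ P x s by [].
have H1 s : s * bs - FF _ _ _ P x s <= shatstar * bs - FF _ _ _ P x shatstar.
  by rewrite -!K1.
have H2 s : s * a - FF _ _ _ P x s <= shat * a - FF _ _ _ P x shat.
  by rewrite -!K2.
case: (ltP shat shatstar) => // hle; exfalso.
have h1 := H1 shat; have h2 := H2 shatstar.
have eq : shat = shatstar.
  move: (FF _ _ _ P x shat) (FF _ _ _ P x shatstar) h1 h2 => F1 F2 h1 h2.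
  apply/eqP; rewrite eq_le hle andbT.
  nra.
subst shat.
exact: (@core _ _ _ _ _ mx ix _ _ _ Hiv H1 H2).
Qed.
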